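(* Let $(P,Q,n)$ be a CI-problem over a field $\mathbb{K}$, and let the intervals $\mathcal I_i,\mathcal J_j\subseteq\mathbf{Z}^2$ ($1\le i,j\le n$) and the integer $m=|P|+|Q|$ be as constructed in the context. If $(i,j)\notin P$, then $\mathrm{Hom}(I^{\mathcal I_i},I^{\mathcal J_j}(1))\cong\mathbb{K}$; more precisely, every morphism $f:I^{\mathcal I_i}\to I^{\mathcal J_j}(1)$ is determined by $f_{(2m+1,2m+1)}\in\mathbb{K}$, and for every $p\in\mathbf{Z}^2$, either $f_p=0$ or $f_p=f_{(2m+1,2m+1)}$. Symmetrically, if $(j,i)\notin Q$, then $\mathrm{Hom}(I^{\mathcal J_j},I^{\mathcal I_i}(1))\cong\mathbb{K}$ with every morphism $g$ determined by $g_{(2m+1,2m+1)}$ and $g_p\in\{0,g_{(2m+1,2m+1)}\}$ for all $p$.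
   Context: A constrained invertibility (CI) problem is a triple $(P,Q,n)$ with $P,Q\subseteq\{1,\dots,n\}^2$; it is solvable if there is an invertible $n\times n$ matrix $A$ over $\mathbb{K}$ with $A_{i,j}=0$ for all $(i,j)\in P$ and $(A^{-1})_{i',j'}=0$ for all $(i',j')\in Q$. Modules are functors $\mathbf{Z}^2\to\mathbf{Vec}_{\mathbb{K}}$ with the product order on $\mathbf{Z}^2$; $M(1)$ denotes the shift $M(1)_a=M_{a+(1,1)}$. For an interval $\mathcal J\subseteq\mathbf{Z}^2$, $I^{\mathcal J}$ is the interval module ($\mathbb{K}$ on $\mathcal J$, $0$ elsewhere, identity maps within $\mathcal J$, zero otherwise). Construction: let $m=|P|+|Q|$. For $p\in\mathbf{Z}^2$ let $\langle p\rangle=\{q\in\mathbf{Z}^2: p\le q\le(2m+2,2m+2)\}$. Let $\mathcal W=\bigcup_{k=0}^m\langle(2m-2k,2k)\rangle$ and $x_k=(2m-2k+1,2k-1)$ for $k=1,\dots,m$. Enumerate $P=\{(p_1,q_1),\dots,(p_r,q_r)\}$ and $Q=\{(p_{r+1},q_{r+1}),\dots,(p_m,q_m)\}$. Set $\mathcal I_i^0=\mathcal J_i^0=\mathcal W$ for all $i$. For $k=1,\dots,r$: $\mathcal I_i^k=\mathcal I_i^{k-1}\cup\langle x_k-(1,1)\rangle$ if $i=p_k$, else $\mathcal I_i^{k-1}\cup\langle x_k\rangle$; $\mathcal J_i^k=\mathcal J_i^{k-1}$ if $i=q_k$, else $\mathcal J_i^{k-1}\cup\langle x_k\rangle$. For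 $k=r+1,\dots,m$: $\mathcal I_i^k=\mathcal I_i^{k-1}$ if $i=q_k$, else $\mathcal I_i^{k-1}\cup\langle x_k\rangle$; $\mathcal J_i^k=\mathcal J_i^{k-1}\cup\langle x_k-(1,1)\rangle$ if $i=p_k$, else $\mathcal J_i^{k-1}\cup\langle x_k\rangle$. Finally $\mathcal I_i=\mathcal I_i^m$, $\mathcal J_i=\mathcal J_i^m$. *)

(* Defs.v *)
From HB Require Import structures.
From mathcomp Require Import all_boot all_order all_algebra.
Set Implicit Arguments. Unset Strict Implicit. Unset Printing Implicit Defensive.
Import Order.TTheory GRing.Theory Num.Theory.
Local Open Scope ring_scope.

Definition pt := (int * int)%type.
Definition leZ2 (p q : pt) : bool := (p.1 <= q.1) && (p.2 <= q.2).
Definition addpt (p q : pt) : pt := (p.1 + q.1, p.2 + q.2).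

Definition box (m : nat) (p : pt) : pred pt :=
  fun q => leZ2 p q && leZ2 q ((2 * m + 2)%:Z, (2 * m + 2)%:Z).

Definition Wset (m : nat) : pred pt :=
  fun q => has (fun k : nat => box m ((2 * m)%:Z - (2 * k)%:Z, (2 * k)%:Z) q)
               (iota 0 m.+1).

Definition xk (m k : nat) : pt :=
  ((2 * m)%:Z - (2 * k)%:Z + 1, (2 * k)%:Z - 1).
Definition xk' (m k : nat) : pt := addpt (xk m k) (-1, -1).

(* A CI-problem (P,Q,n): P and Q are given by enumerations (seq of pairs
   of indices in {1..n}); the k-th pair (1-indexed) of P ++ Q is
   (p_k, q_k), k = 1..m, with r = |P|. *)
Definition mCI (P Q : seq (nat * nat)) : nat := size P + size Q.
Definition pk (P Q : seq (nat * nat)) (k : nat) : nat := (nth (0, 0)%N (P ++ Q) k.-1).1.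
Definition qk (P Q : seq (nat * nat)) (k : nat) : nat := (nth (0, 0)%N (P ++ Q) k.-1).2.

Fixpoint Icon (P Q : seq (nat * nat)) (i : nat) (k : nat) : pred pt :=
  match k with
  | 0 => Wset (mCI P Q)
  | k'.+1 => fun q =>
      Icon P Q i k' q ||
      (if (k <= size P)%N then
         (if i == pk P Q k then box (mCI P Q) (xk' (mCI P Q) k) q
          else box (mCI P Q) (xk (mCI P Q) k) q)
       else
         (if i == qk P Q k then false
          else box (mCI P Q) (xk (mCI P Q) k) q))
  end.

Fixpoint Jcon (P Q : seq (nat * nat)) (i : nat) (k : nat) : pred pt :=
  match k with
  | 0 => Wset (mCI P Q)
  | k'.+1 => fun q =>
      Jcon P Q i k' q ||
      (if (k <= size P)%N then
         (if i == qk P Q k then false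
          else box (mCI P Q) (xk (mCI P Q) k) q)
       else
         (if i == pk P Q k then box (mCI P Q) (xk' (mCI P Q) k) q
          else box (mCI P Q) (xk (mCI P Q) k) q))
  end.

Definition Ical (P Q : seq (nat * nat)) (i : nat) : pred pt := Icon P Q i (mCI P Q).
Definition Jcal (P Q : seq (nat * nat)) (i : nat) : pred pt := Jcon P Q i (mCI P Q).

(* Finite-dimensional modules over Z^2 (pointwise dimensions and structure
   matrices, acting on row vectors: x |-> x *m pmap p q for p <= q). *)
Record pmod (K : fieldType) := PMod {
  pdim : pt -> nat;
  pmap : forall p q : pt, 'M[K]_(pdim p, pdim q) }.

Definition intmod (K : fieldType) (J : pred pt) : pmod K :=
  @PMod K (fun p => nat_of_bool (J p))
    (fun p q => \matrix_(x, y) (if J p && J q then 1 else 0)).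

Definition shift1 (K : fieldType) (M : pmod K) : pmod K :=
  @PMod K (fun p => pdim M (addpt p (1, 1)))
    (fun p q => pmap M (addpt p (1, 1)) (addpt q (1, 1))).

Definition is_morph (K : fieldType) (M N : pmod K)
  (f : forall p, 'M[K]_(pdim M p, pdim N p)) : Prop :=
  forall p q : pt, leZ2 p q -> pmap M p q *m f q = f p *m pmap N p q.
Arguments is_morph {K} M N f.

(* Main.v *)
Require Import Defs.
From HB Require Import structures.
From mathcomp Require Import all_boot all_order all_algebra.
From mathcomp Require Import zify.
Import Order.TTheory GRing.Theory Num.Theory.
Set Implicit Arguments. Unset Strict Implicit.
Local Open Scope ring_scope.

Lemma ord_bool (b : bool) (x : 'I_b) : b.
Proof. by case: b x => // -[]. Qed.

Lemma ordb_eq (b : bool) (u v : 'I_b) : u = v.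
Proof. apply: val_inj; case: b u v => -[[|?] ?] [[|?] ?] //. Qed.

Lemma ordb_lt (b : bool) (hb : b) : (0 < b)%N. Proof. by rewrite hb. Qed.
Definition ordb (b : bool) (hb : b) : 'I_b := @Ordinal b 0 (@ordb_lt b hb).

Lemma sum_b (K : fieldType) (b : bool) (hb : b) (F : 'I_b -> K) :
  \sum_(z < b) F z = F (ordb hb).
Proof.
move: hb F; case: b => // hb F; rewrite big_ord1; congr F; exact: ordb_eq.
Qed.

Lemma leZ2_trans p q r : leZ2 p q -> leZ2 q r -> leZ2 p r.
Proof. rewrite /leZ2 => /andP[h1 h2] /andP[h3 h4]; apply/andP; split; lia. Qed.

Lemma generic (K : fieldType) (A B : pred pt) (c : pt)
  (hAc : A c) (hBc : B (addpt c (1,1)))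
  (hup : forall p q, leZ2 p q -> leZ2 q c -> A p -> A q)
  (hdom : forall p, B (addpt p (1,1)) -> leZ2 p c)
  (hAB : forall p, leZ2 p c -> A p -> B (addpt p (1,1))) :
   let M := intmod K A in
   let N := shift1 (intmod K B) in
   [/\ pdim M c = 1%N, pdim N c = 1%N,
       (forall a : K, exists f, is_morph M N f /\ forall x y, f c x y = a),
       (forall f g, is_morph M N f -> is_morph M N g ->
          (forall x y, f c x y = g c x y) -> forall p, f p = g p) &
       (forall f, is_morph M N f -> forall a : K, (forall x y, f c x y = a) ->
          forall p, f p = 0 \/ forall x y, f p x y = a)].
Proof.
move=> M N.
have key : forall f, is_morph M N f -> forall p x y,
    f p x y = f c (ordb hAc) (ordb hBc).
  move=> f hf p x y.
  have Ap : A p := ord_bool x.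
  have Bp : B (addpt p (1,1)) := ord_bool y.
  have pc := hdom _ Bp.
  have := hf p c pc => /matrixP /(_ x (ordb hBc)).
  rewrite !mxE /= (sum_b hAc) (sum_b Bp) !mxE.
  rewrite (_ : A p && A c = true) ?Ap ?hAc //.
  rewrite (_ : B (addpt p (1,1)) && B (addpt c (1,1)) = true) ?Bp ?hBc //.
  rewrite mul1r mulr1 => ->; congr (f p x); exact: ordb_eq.
split.
- by rewrite /= hAc.
- by rewrite /= hBc.
- move=> a; exists (fun p => const_mx a); split; last by move=> x y; rewrite mxE.
  move=> p q pq; apply/matrixP => x y.
  have Ap : A p := ord_bool x.
  have Bq : B (addpt q (1,1)) := ord_bool y.
  have qc := hdom _ Bq.
  have Aq := hup _ _ pq qc Ap.
  have Bp := hAB _ (leZ2_trans pq qc) Ap.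
  rewrite !mxE /= (sum_b Aq) (sum_b Bp) !mxE.
  by rewrite Ap Aq Bp Bq mul1r mulr1.
- move=> f g hf hg hfg p; apply/matrixP => x y.
  by rewrite (key f hf) (key g hg) hfg.
- move=> f hf a ha p.
  have [/andP[Ap Bp]|nAB] := boolP (A p && B (addpt p (1,1))).
    by right => x y; rewrite (key f hf) ha.
  left; apply/matrixP => x y; exfalso; apply: (negP nAB).
  by rewrite (ord_bool x) (ord_bool y).
Qed.
Definition Tp (m : nat) : pt := ((2 * m + 2)%:Z, (2 * m + 2)%:Z).

Lemma leZ2_trans' p q r : leZ2 p q -> leZ2 q r -> leZ2 p r.
Proof. rewrite /leZ2 => /andP[h1 h2] /andP[h3 h4]; apply/andP; split; lia. Qed.

Lemma box_up m g p q : leZ2 p q -> leZ2 q (Tp m) -> box m g p -> box m g q.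
Proof.
rewrite /box => pq qT /andP[gp _]; apply/andP; split => //.
exact: leZ2_trans' gp pq.
Qed.

Lemma box_T m g q : box m g q -> leZ2 q (Tp m).
Proof. by case/andP. Qed.

Lemma W_up m p q : leZ2 p q -> leZ2 q (Tp m) -> Wset m p -> Wset m q.
Proof.
move=> pq qT /hasP[k kin hk]; apply/hasP; exists k => //; exact: box_up hk.
Qed.

Lemma W_T m q : Wset m q -> leZ2 q (Tp m).
Proof. by case/hasP=> k _ /box_T. Qed.

Lemma I_up P Q i k p q : leZ2 p q -> leZ2 q (Tp (mCI P Q)) ->
  Icon P Q i k p -> Icon P Q i k q.
Proof.
move=> pq qT; elim: k => [|k IH] /=; first exact: W_up.
case/orP=> [h|h]; apply/orP; [by left; apply: IH|right].
move: h; do 2 (case: ifP => _) => //; exact: box_up.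
Qed.

Lemma J_up P Q i k p q : leZ2 p q -> leZ2 q (Tp (mCI P Q)) ->
  Jcon P Q i k p -> Jcon P Q i k q.
Proof.
move=> pq qT; elim: k => [|k IH] /=; first exact: W_up.
case/orP=> [h|h]; apply/orP; [by left; apply: IH|right].
move: h; do 2 (case: ifP => _) => //; exact: box_up.
Qed.

Lemma I_T P Q i k q : Icon P Q i k q -> leZ2 q (Tp (mCI P Q)).
Proof.
elim: k => [|k IH] /=; first exact: W_T.
case/orP=> [h|]; first exact: IH.
do 2 (case: ifP => _) => //; exact: box_T.
Qed.

Lemma J_T P Q i k q : Jcon P Q i k q -> leZ2 q (Tp (mCI P Q)).
Proof.
elim: k => [|k IH] /=; first exact: W_T.
case/orP=> [h|]; first exact: IH.
do 2 (case: ifP => _) => //; exact: box_T.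
Qed.

Lemma I_W P Q i k q : Wset (mCI P Q) q -> Icon P Q i k q.
Proof. by elim: k => [|k IH] //= h; rewrite IH. Qed.

Lemma J_W P Q i k q : Jcon P Q i 0 q -> Jcon P Q i k q.
Proof. by elim: k => [|k IH] //= h; rewrite IH. Qed.

Lemma xk_W m k p : (1 <= k <= m)%N -> leZ2 (xk m k) p ->
  leZ2 (addpt p (1,1)) (Tp m) -> Wset m (addpt p (1,1)).
Proof.
move=> /andP[k1 km] hx hT; apply/hasP; exists k.
  by rewrite mem_iota; apply/andP; split => //; lia.
apply/andP; split => //; move: hx; rewrite /leZ2 /xk /addpt /=.
move=> /andP[h1 h2]; apply/andP; split; lia.
Qed.

Lemma W_shift m p : Wset m p -> leZ2 (addpt p (1,1)) (Tp m) ->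
  Wset m (addpt p (1,1)).
Proof.
move=> hW hT; apply: W_up hW => //; rewrite /leZ2 /addpt /=; apply/andP; split; lia.
Qed.

Lemma xk'_shift m k p : leZ2 (xk' m k) p -> leZ2 (xk m k) (addpt p (1,1)).
Proof.
rewrite /leZ2 /xk' /addpt /= => /andP[h1 h2]; apply/andP; split; lia.
Qed.

Lemma le_shiftT m p : leZ2 p ((2 * m + 1)%:Z, (2 * m + 1)%:Z) ->
  leZ2 (addpt p (1,1)) (Tp m).
Proof. rewrite /leZ2 /addpt /= => /andP[h1 h2]; apply/andP; split; lia. Qed.

Lemma shiftT_le m p : leZ2 (addpt p (1,1)) (Tp m) ->
  leZ2 p ((2 * m + 1)%:Z, (2 * m + 1)%:Z).
Proof. rewrite /leZ2 /addpt /= => /andP[h1 h2]; apply/andP; split; lia. Qed.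

Lemma inP_k P Q k : (1 <= k <= size P)%N -> (pk P Q k, qk P Q k) \in P.
Proof.
case: k => [|k] //= kP; rewrite /pk /qk -surjective_pairing nth_cat /=.
have -> : (k < size P)%N by lia.
exact: mem_nth.
Qed.

Lemma inQ_k P Q k : (size P < k <= mCI P Q)%N -> (pk P Q k, qk P Q k) \in Q.
Proof.
case: k => [|k] //= /andP[k1 kP]; rewrite /pk /qk -surjective_pairing nth_cat /=.
have -> : (k < size P)%N = false by lia.
have h : (k - size P < size Q)%N by rewrite /mCI in kP; lia.
exact: mem_nth.
Qed.

Lemma Wstep P Q j k p : (1 <= k.+1 <= mCI P Q)%N ->
  leZ2 (addpt p (1,1)) (Tp (mCI P Q)) ->
  box (mCI P Q) (xk (mCI P Q) k.+1) p -> Jcon P Q j k (addpt p (1,1)).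
Proof. by move=> k1 pT /andP[h _]; apply: J_W; apply: xk_W k1 h pT. Qed.

Lemma WstepI P Q j k p : (1 <= k.+1 <= mCI P Q)%N ->
  leZ2 (addpt p (1,1)) (Tp (mCI P Q)) ->
  box (mCI P Q) (xk (mCI P Q) k.+1) p -> Icon P Q j k (addpt p (1,1)).
Proof. by move=> k1 pT /andP[h _]; apply: I_W; apply: xk_W k1 h pT. Qed.

Lemma IJ P Q i j k p : (i, j) \notin P -> (k <= mCI P Q)%N ->
  leZ2 p ((2 * mCI P Q + 1)%:Z, (2 * mCI P Q + 1)%:Z) ->
  Icon P Q i k p -> Jcon P Q j k (addpt p (1,1)).
Proof.
move=> nP + pc; have pT := le_shiftT pc.
elim: k => [|k IH] km /=; first by move=> h; apply: W_shift.
case/orP=> [h|h]; first by rewrite IH //; lia.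
have k1 : (1 <= k.+1 <= mCI P Q)%N by lia.
apply/orP; move: h; case: ifP => kP.
  case: ifP => [/eqP ei|_] h.
    case: ifP => [/eqP ej|_].
      by exfalso; move/negP: nP; apply; rewrite ei ej inP_k //; lia.
    by right; case/andP: h => h _; rewrite /box (xk'_shift h) pT.
  by left; apply: Wstep.
case: ifP => // _ h.
by left; apply: Wstep.
Qed.

Lemma JI P Q i j k p : (j, i) \notin Q -> (k <= mCI P Q)%N ->
  leZ2 p ((2 * mCI P Q + 1)%:Z, (2 * mCI P Q + 1)%:Z) ->
  Jcon P Q j k p -> Icon P Q i k (addpt p (1,1)).
Proof.
move=> nQ + pc; have pT := le_shiftT pc.
elim: k => [|k IH] km /=; first by move=> h; apply: W_shift.
case/orP=> [h|h]; first by rewrite IH //; lia.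
have k1 : (1 <= k.+1 <= mCI P Q)%N by lia.
apply/orP; move: h; case: ifP => kP.
  case: ifP => // _ h.
  by left; apply: WstepI.
case: ifP => [/eqP ej|_] h.
  case: ifP => [/eqP ei|_].
    by exfalso; move/negP: nQ; apply; rewrite ei ej inQ_k //; lia.
  by right; case/andP: h => h _; rewrite /box (xk'_shift h) pT.
by left; apply: WstepI.
Qed.

Lemma W_c m : Wset m ((2 * m + 1)%:Z, (2 * m + 1)%:Z).
Proof.
apply/hasP; exists 0%N; first by rewrite mem_iota.
rewrite /box /leZ2 /=; apply/andP; split; apply/andP; split; lia.
Qed.

Lemma W_c1 m : Wset m (addpt ((2 * m + 1)%:Z, (2 * m + 1)%:Z) (1,1)).
Proof.
apply/hasP; exists 0%N; first by rewrite mem_iota.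
rewrite /box /leZ2 /addpt /=; apply/andP; split; apply/andP; split; lia.
Qed.

Lemma c_T m : leZ2 ((2 * m + 1)%:Z, (2 * m + 1)%:Z) (Tp m).
Proof. rewrite /leZ2 /=; apply/andP; split; lia. Qed.

Theorem mainTheorem5 (K : fieldType) (n : nat) (P Q : seq (nat * nat))
  (uP : uniq P) (uQ : uniq Q)
  (hP : all (fun ij => (1 <= ij.1 <= n)%N && (1 <= ij.2 <= n)%N) P)
  (hQ : all (fun ij => (1 <= ij.1 <= n)%N && (1 <= ij.2 <= n)%N) Q)
  (i j : nat) (hi : (1 <= i <= n)%N) (hj : (1 <= j <= n)%N) :
  let c : pt := ((2 * mCI P Q + 1)%:Z, (2 * mCI P Q + 1)%:Z) in
  ((i, j) \notin P ->
   let M := intmod K (Ical P Q i) in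
   let N := shift1 (intmod K (Jcal P Q j)) in
   [/\ pdim M c = 1%N, pdim N c = 1%N,
       (forall a : K, exists f, is_morph M N f /\ forall x y, f c x y = a),
       (forall f g, is_morph M N f -> is_morph M N g ->
          (forall x y, f c x y = g c x y) -> forall p, f p = g p) &
       (forall f, is_morph M N f -> forall a : K, (forall x y, f c x y = a) ->
          forall p, f p = 0 \/ forall x y, f p x y = a)]) /\
  ((j, i) \notin Q ->
   let M := intmod K (Jcal P Q j) in
   let N := shift1 (intmod K (Ical P Q i)) in
   [/\ pdim M c = 1%N, pdim N c = 1%N,
       (forall a : K, exists g, is_morph M N g /\ forall x y, g c x y = a),
       (forall f g, is_morph M N f -> is_morph M N g ->
          (forall x y, f c x y = g c x y) -> forall p, f p = g p) &
       (forall g, is_morph M N g -> forall a : K, (forall x y, g c x y = a) ->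
          forall p, g p = 0 \/ forall x y, g p x y = a)]).
Proof.
move=> c; split => nPQ.
- apply: generic.
  + exact: I_W (W_c _).
  + exact: J_W (W_c1 _).
  + move=> p q pq qc; apply: I_up pq (leZ2_trans qc (c_T _)).
  + move=> p /J_T; exact: shiftT_le.
  + move=> p pc; exact: IJ nPQ (leqnn _) pc.
- apply: generic.
  + exact: J_W (W_c _).
  + exact: I_W (W_c1 _).
  + move=> p q pq qc; apply: J_up pq (leZ2_trans qc (c_T _)).
  + move=> p /I_T; exact: shiftT_le.
  + move=> p pc; exact: JI nPQ (leqnn _) pc.
Qed.
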